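(* Let $f:\mathbb{R}^n\to\mathbb{R}$, $g:\mathbb{R}^m\to\mathbb{R}$, $Q:\mathbb{R}^n\times\mathbb{R}^m\to\mathbb{R}\cup\{+\infty\}$ and $L(x,y)=f(x)+Q(x,y)+g(y)$ satisfy: (A1) $L$ is bounded below; $f,g$ are continuously differentiable with $\nabla f$, $\nabla g$ Lipschitz continuous with constants $L_{\nabla f}$, $L_{\nabla g}$; $Q$ is proper and lower semicontinuous; $\phi_1:\mathbb{R}^n\to\mathbb{R}$, $\phi_2:\mathbb{R}^m\to\mathbb{R}$ are differentiable, $\phi_i$ is $\theta_i$-strongly convex with $\theta_1>L_{\nabla f}$, $\theta_2>L_{\nabla g}$, and $\nabla\phi_i$ is $\eta_i$-Lipschitz continuous ($i=1,2$); (A2) $L$ is coercive and $\mathrm{dom}\,Q$ is closed; for all $(x,y)\in\mathrm{dom}\,Q$, $\partial_xQ(x,y)\times\partial_yQ(x,y)\subset\partial Q(x,y)$; and $Q(x,y)=q(x,y)+h(x)$, where $h:\mathbb{R}^n\to\mathbb{R}\cup\{+\infty\}$ is continuous on its domain, $q$ is continuous on $\mathrm{dom}\,Q$, for every $y$ the partial function $q(\cdot,y)$ is continuously differentiable, and for each bounded subset $D_1\times D_2\subset\mathrm{dom}\,Q$ there exists $\xi>0$ such that $\|\nabla_xq(\bar x,y)-\nabla_xq(\bar x,\bar y)\|\le\xi\|y-\bar y\|$ for all $\bar x\in D_1$, $y,\bar y\in D_2$. Let $z_k=(x_k,y_k)$, together with $(\hat x_k,\hat y_k)$, be generated by the following algorithm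 with initial point $z_0=(x_0,y_0)$: set $(\hat x_0,\hat y_0)=(x_0,y_0)$, choose $\alpha_{\max},\beta_{\max}\ge0$ with $\alpha_{\max}+\beta_{\max}<1$ and $\alpha_k\in[0,\alpha_{\max}]$, $\beta_k\in[0,\beta_{\max}]$; for $k=0,1,\dots$: 1. $x_{k+1}\in\arg\min_{x}\{Q(x,\hat y_k)+\langle\nabla f(\hat x_k),x\rangle+D_{\phi_1}(x,\hat x_k)\}$, $y_{k+1}\in\arg\min_{y}\{Q(x_{k+1},y)+\langle\nabla g(\hat y_k),y\rangle+D_{\phi_2}(y,\hat y_k)\}$; 2. $u_{k+1}=x_{k+1}+\alpha_k(x_{k+1}-x_k)+\beta_k(x_k-x_{k-1})$, $v_{k+1}=y_{k+1}+\alpha_k(y_{k+1}-y_k)+\beta_k(y_k-y_{k-1})$; 3. if $L(u_{k+1},v_{k+1})\le L(x_{k+1},y_{k+1})$ then $(\hat x_{k+1},\hat y_{k+1})=(u_{k+1},v_{k+1})$, else $(\hat x_{k+1},\hat y_{k+1})=(x_{k+1},y_{k+1})$. Let $\mathcal{L}(z_0)$ be the set of cluster points of $\{z_k\}$, i.e. the set of $\hat z\in\mathbb{R}^n\times\mathbb{R}^m$ for which there is a strictly increasing sequence $\{k_j\}$ with $z_{k_j}\to\hat z$. Then: (i) $\mathcal{L}(z_0)$ is a nonempty compact set, and $L$ is finite and constant on $\mathcal{L}(z_0)$; (ii) $\mathcal{L}(z_0)\subset\mathrm{crit}\,L$; (iii) $\lim_{k\to\infty}\mathrm{dist}(z_k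,\mathcal{L}(z_0))=0$.
   Context: For a convex differentiable $\phi$, $D_\phi(x,y)=\phi(x)-\phi(y)-\langle\nabla\phi(y),x-y\rangle$ (Bregman distance). $\phi$ is $\theta$-strongly convex if $\phi-\frac\theta2\|\cdot\|^2$ is convex. For a proper lsc $F$, the Fréchet subdifferential $\hat\partial F(x)$ is the set of $v$ with $\liminf_{y\to x}\frac{F(y)-F(x)-\langle v,y-x\rangle}{\|y-x\|}\ge0$ (empty if $x\notin\mathrm{dom}F$), and the (limiting) subdifferential is $\partial F(x)=\{v:\exists x_k\to x, F(x_k)\to F(x), v_k\in\hat\partial F(x_k), v_k\to v\}$. $\partial_xQ$, $\partial_yQ$ are the limiting subdifferentials of the partial functions. $\mathrm{crit}\,L=\{z: 0\in\partial L(z)\}$ is the set of critical points. $(x_{-1},y_{-1})$ in step 2 is a given initial point (e.g. $(x_0,y_0)$). *)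

(* Defs.v *)
(* R^d is represented by row vectors 'rV[R]_d; the product space
   R^n x R^m is identified with 'rV[R]_(n+m) via row_mx / lsubmx / rsubmx
   (this identification is isometric for the Euclidean norms below). *)
From HB Require Import structures.
From mathcomp Require Import all_boot all_order all_algebra.
From mathcomp Require Import all_classical all_reals all_analysis.
Set Implicit Arguments. Unset Strict Implicit. Unset Printing Implicit Defensive.
Import Order.TTheory GRing.Theory Num.Theory.
Import numFieldNormedType.Exports.
Local Open Scope classical_set_scope.
Local Open Scope ring_scope.

Section Defs.
Variable R : realType.

Definition dotv {d : nat} (u v : 'rV[R]_d) : R := \sum_(i < d) u ord0 i * v ord0 i.
Definition normv {d : nat} (u : 'rV[R]_d) : R := Num.sqrt (dotv u u).

Definition cvgv {d : nat} (u : nat -> 'rV[R]_d) (a : 'rV[R]_d) : Prop :=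
  forall e : R, 0 < e -> exists N : nat, forall k, (N <= k)%N -> normv (u k - a) < e.
Definition cvgr (u : nat -> R) (a : R) : Prop :=
  forall e : R, 0 < e -> exists N : nat, forall k, (N <= k)%N -> `|u k - a| < e.

Definition contv {d p : nat} (G : 'rV[R]_d -> 'rV[R]_p) : Prop :=
  forall x (e : R), 0 < e -> exists2 del : R, 0 < del &
    forall y, normv (y - x) < del -> normv (G y - G x) < e.

Definition lipschitzv {d p : nat} (G : 'rV[R]_d -> 'rV[R]_p) (c : R) : Prop :=
  forall x y, normv (G x - G y) <= c * normv (x - y).

Definition has_grad {d : nat} (F : 'rV[R]_d -> R) (G : 'rV[R]_d -> 'rV[R]_d) : Prop :=
  forall x (e : R), 0 < e -> exists2 del : R, 0 < del &
    forall y, normv (y - x) < del ->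
      `|F y - F x - dotv (G x) (y - x)| <= e * normv (y - x).

Definition convexv {d : nat} (F : 'rV[R]_d -> R) : Prop :=
  forall x y (t : R), 0 <= t <= 1 ->
    F (t *: x + (1 - t) *: y) <= t * F x + (1 - t) * F y.
Definition strongly_convex {d : nat} (F : 'rV[R]_d -> R) (theta : R) : Prop :=
  convexv (fun x => F x - theta / 2 * normv x ^+ 2).

Definition bregman {d : nat} (phi : 'rV[R]_d -> R) (dphi : 'rV[R]_d -> 'rV[R]_d)
  (x y : 'rV[R]_d) : R := phi x - phi y - dotv (dphi y) (x - y).

Definition domain {d : nat} (F : 'rV[R]_d -> \bar R) : set 'rV[R]_d :=
  [set x | (F x < +oo)%E].
Definition proper_fun {d : nat} (F : 'rV[R]_d -> \bar R) : Prop :=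
  (forall x, F x != -oo%E) /\ exists x, (F x < +oo)%E.
Definition lsc {d : nat} (F : 'rV[R]_d -> \bar R) : Prop :=
  forall x (a : R), (a%:E < F x)%E -> exists2 del : R, 0 < del &
    forall y, normv (y - x) < del -> (a%:E < F y)%E.

(* Frechet subdifferential: v in \hat\partial F(x) iff x in dom F and
   liminf_{y->x} (F y - F x - <v,y-x>)/|y-x| >= 0 (written out) *)
Definition frechet_sub {d : nat} (F : 'rV[R]_d -> \bar R) (x v : 'rV[R]_d) : Prop :=
  F x \is a fin_num /\
  forall e : R, 0 < e -> exists2 del : R, 0 < del &
    forall y, normv (y - x) < del ->
      (F x + (dotv v (y - x) - e * normv (y - x))%:E <= F y)%E.

Definition lim_sub {d : nat} (F : 'rV[R]_d -> \bar R) (x v : 'rV[R]_d) : Prop :=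
  F x \is a fin_num /\
  exists (xs vs : nat -> 'rV[R]_d),
    [/\ cvgv xs x, cvgr (fun k => fine (F (xs k))) (fine (F x)),
        forall k, frechet_sub F (xs k) (vs k) & cvgv vs v].

Definition crit {d : nat} (F : 'rV[R]_d -> \bar R) : set 'rV[R]_d :=
  [set z | lim_sub F z 0].

Definition distv {d : nat} (z : 'rV[R]_d) (S : set 'rV[R]_d) : R :=
  inf [set normv (z - s) | s in S].

Definition cluster_points {d : nat} (z : nat -> 'rV[R]_d) : set 'rV[R]_d :=
  [set zh | exists phi : nat -> nat,
     (forall j, (phi j < phi j.+1)%N) /\ cvgv (fun j => z (phi j)) zh].

Definition boundedv {d : nat} (S : set 'rV[R]_d) : Prop :=
  exists M : R, forall s, S s -> normv s <= M.

Definition uncurryv {n m : nat} {T : Type} (F : 'rV[R]_n -> 'rV[R]_m -> T)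
  (z : 'rV[R]_(n + m)) : T := F (lsubmx z) (rsubmx z).
Definition Lobj {n m : nat} (f : 'rV[R]_n -> R) (Q : 'rV[R]_n -> 'rV[R]_m -> \bar R)
  (g : 'rV[R]_m -> R) (x : 'rV[R]_n) (y : 'rV[R]_m) : \bar R :=
  ((f x)%:E + Q x y + (g y)%:E)%E.

End Defs.

(* Main.v *)
Require Import Defs.
From HB Require Import structures.
From mathcomp Require Import all_boot all_order all_algebra.
From mathcomp Require Import all_classical all_reals all_analysis.
From mathcomp Require Import ring lra.
Import Order.TTheory GRing.Theory Num.Theory.
Import numFieldNormedType.Exports.
Local Open Scope classical_set_scope.
Local Open Scope ring_scope.

Set Implicit Arguments. Set Strict Implicit.
Section Eucl.
Context {R : realType}.
Implicit Types (a b : R).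

Lemma dotvC d (u v : 'rV[R]_d) : dotv u v = dotv v u.
Proof. by apply: eq_bigr => i _; rewrite mulrC. Qed.

Lemma dotvDl d (u w v : 'rV[R]_d) : dotv (u + w) v = dotv u v + dotv w v.
Proof. by rewrite /dotv -big_split; apply: eq_bigr => i _; rewrite mxE mulrDl. Qed.

Lemma dotvZl d a (u v : 'rV[R]_d) : dotv (a *: u) v = a * dotv u v.
Proof. by rewrite /dotv mulr_sumr; apply: eq_bigr => i _; rewrite mxE mulrA. Qed.

Lemma dotvNl d (u v : 'rV[R]_d) : dotv (- u) v = - dotv u v.
Proof. by rewrite -scaleN1r dotvZl mulN1r. Qed.

Lemma dotvBl d (u w v : 'rV[R]_d) : dotv (u - w) v = dotv u v - dotv w v.
Proof. by rewrite dotvDl dotvNl. Qed.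

Lemma dotvDr d (u w v : 'rV[R]_d) : dotv v (u + w) = dotv v u + dotv v w.
Proof. by rewrite dotvC dotvDl !(dotvC v). Qed.
Lemma dotvZr d a (u v : 'rV[R]_d) : dotv v (a *: u) = a * dotv v u.
Proof. by rewrite dotvC dotvZl dotvC. Qed.
Lemma dotvNr d (u v : 'rV[R]_d) : dotv v (- u) = - dotv v u.
Proof. by rewrite dotvC dotvNl dotvC. Qed.
Lemma dotvBr d (u w v : 'rV[R]_d) : dotv v (u - w) = dotv v u - dotv v w.
Proof. by rewrite dotvDr dotvNr. Qed.
Lemma dotv0r d (v : 'rV[R]_d) : dotv v 0 = 0.
Proof. by rewrite /dotv big1 // => i _; rewrite mxE mulr0. Qed.
Lemma dotv0l d (v : 'rV[R]_d) : dotv 0 v = 0.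
Proof. by rewrite dotvC dotv0r. Qed.

Lemma dotv_ge0 d (u : 'rV[R]_d) : 0 <= dotv u u.
Proof. by apply: sumr_ge0 => i _; rewrite -expr2 sqr_ge0. Qed.

Lemma normv_ge0 d (u : 'rV[R]_d) : 0 <= normv u.
Proof. exact: sqrtr_ge0. Qed.

Lemma normv_sqr d (u : 'rV[R]_d) : normv u ^+ 2 = dotv u u.
Proof. by rewrite /normv sqr_sqrtr // dotv_ge0. Qed.

Lemma dotv_eq0 d (u : 'rV[R]_d) : dotv u u = 0 -> u = 0.
Proof.
move=> H; apply/rowP => i; rewrite mxE.
have P : forall j : 'I_d, predT j -> 0 <= u ord0 j * u ord0 j.
  by move=> j _; rewrite -expr2 sqr_ge0.
have := @psumr_eq0P R _ predT (fun i => u ord0 i * u ord0 i) P H i isT.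
by move=> /eqP; rewrite mulf_eq0 orbb => /eqP.
Qed.

Lemma normv_eq0 d (u : 'rV[R]_d) : normv u = 0 -> u = 0.
Proof. by move=> H; apply: dotv_eq0; rewrite -normv_sqr H expr0n. Qed.

Lemma normv0 d : normv (0 : 'rV[R]_d) = 0.
Proof. by rewrite /normv dotv0r sqrtr0. Qed.

Lemma normvZ d a (u : 'rV[R]_d) : normv (a *: u) = `|a| * normv u.
Proof.
by rewrite /normv dotvZl dotvZr mulrA -expr2 sqrtrM ?sqr_ge0 // sqrtr_sqr.
Qed.

Lemma normvN d (u : 'rV[R]_d) : normv (- u) = normv u.
Proof. by rewrite -scaleN1r normvZ normrN1 mul1r. Qed.

Lemma normvB d (u v : 'rV[R]_d) : normv (u - v) = normv (v - u).
Proof. by rewrite -normvN opprB. Qed.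

Lemma CS_aux d (u v : 'rV[R]_d) : dotv u v <= normv u * normv v.
Proof.
have [u0|] := eqVneq (normv u) 0.
  by rewrite (normv_eq0 u u0) dotv0l normv0 mul0r.
have [v0|] := eqVneq (normv v) 0.
  by rewrite (normv_eq0 v v0) dotv0r normv0 mulr0.
move=> vn0 un0.
have ha := normv_ge0 u; have hb := normv_ge0 v.
have ua : 0 < normv u by rewrite lt_def un0.
have vb : 0 < normv v by rewrite lt_def vn0.
have := dotv_ge0 (normv v *: u - normv u *: v).
rewrite !(dotvBl, dotvBr, dotvZl, dotvZr) -!normv_sqr (dotvC v u).
set a := normv u; set b := normv v; set c := dotv u v => H.
have : 0 <= 2 * (a * b) * (a * b - c) by nra.
by rewrite pmulr_rge0 ?subr_ge0 // mulr_gt0 // mulr_gt0.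
Qed.

Lemma CS d (u v : 'rV[R]_d) : `|dotv u v| <= normv u * normv v.
Proof.
rewrite ler_norml CS_aux andbT.
by have := CS_aux (- u) v; rewrite dotvNl normvN lerNl.
Qed.

Lemma normvD d (u v : 'rV[R]_d) : normv (u + v) <= normv u + normv v.
Proof.
rewrite -(@ler_pXn2r _ 2) // ?nnegrE ?addr_ge0 ?normv_ge0 //.
rewrite normv_sqr !(dotvDl, dotvDr) sqrrD -!normv_sqr (dotvC v u).
have := CS_aux u v; lra.
Qed.

Lemma normv_sub_le d (u v w : 'rV[R]_d) : normv (u - w) <= normv (u - v) + normv (v - w).
Proof. by have := normvD (u - v) (v - w); rewrite addrA subrK. Qed.

Lemma dotv_row n m (x x' : 'rV[R]_n) (y y' : 'rV[R]_m) :
  dotv (row_mx x y) (row_mx x' y') = dotv x x' + dotv y y'.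
Proof.
rewrite /dotv big_split_ord /=; congr (_ + _); apply: eq_bigr => i _;
by rewrite ?row_mxEl ?row_mxEr.
Qed.

Lemma normv_row_sqr n m (x : 'rV[R]_n) (y : 'rV[R]_m) :
  normv (row_mx x y) ^+ 2 = normv x ^+ 2 + normv y ^+ 2.
Proof. by rewrite !normv_sqr dotv_row. Qed.

Lemma normv_row_le n m (x : 'rV[R]_n) (y : 'rV[R]_m) :
  normv (row_mx x y) <= normv x + normv y.
Proof.
rewrite -(@ler_pXn2r _ 2) // ?nnegrE ?addr_ge0 ?normv_ge0 //.
rewrite normv_row_sqr sqrrD; have := normv_ge0 x; have := normv_ge0 y; nra.
Qed.

Lemma normv_row_gel n m (x : 'rV[R]_n) (y : 'rV[R]_m) :
  normv x <= normv (row_mx x y).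
Proof.
rewrite -(@ler_pXn2r _ 2) // ?nnegrE ?normv_ge0 //.
by rewrite normv_row_sqr lerDl sqr_ge0.
Qed.

Lemma normv_row_ger n m (x : 'rV[R]_n) (y : 'rV[R]_m) :
  normv y <= normv (row_mx x y).
Proof.
rewrite -(@ler_pXn2r _ 2) // ?nnegrE ?normv_ge0 //.
by rewrite normv_row_sqr lerDr sqr_ge0.
Qed.

Lemma normv_lsub n m (z : 'rV[R]_(n + m)) : normv (lsubmx z) <= normv z.
Proof. by rewrite -{2}(hsubmxK z) normv_row_gel. Qed.
Lemma normv_rsub n m (z : 'rV[R]_(n + m)) : normv (rsubmx z) <= normv z.
Proof. by rewrite -{2}(hsubmxK z) normv_row_ger. Qed.

Lemma dotv_split n m (a z : 'rV[R]_(n + m)) :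
  dotv a z = dotv (lsubmx a) (lsubmx z) + dotv (rsubmx a) (rsubmx z).
Proof. by rewrite -{1}(hsubmxK a) -{1}(hsubmxK z) dotv_row. Qed.

Lemma coord_le_normv d (u : 'rV[R]_d) i : `|u ord0 i| <= normv u.
Proof.
rewrite -(@ler_pXn2r _ 2) // ?nnegrE ?normv_ge0 //.
rewrite normv_sqr real_normK ?num_real // /dotv (bigD1 i) //= expr2 lerDl.
by apply: sumr_ge0 => j _; rewrite -expr2 sqr_ge0.
Qed.

Lemma mxnorm_le_normv d (u : 'rV[R]_d) : `|u| <= normv u.
Proof.
change (mx_norm u <= normv u); rewrite mx_normrE; apply: bigmax_le; first exact: normv_ge0.
by move=> [i j] _ /=; rewrite (ord1 i); exact: coord_le_normv.
Qed.

Lemma normv_le_mxnorm d (u : 'rV[R]_d) : normv u <= d%:R * `|u|.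
Proof.
rewrite -(@ler_pXn2r _ 2) // ?nnegrE ?normv_ge0 ?mulr_ge0 //.
rewrite normv_sqr exprMn.
have H : dotv u u <= \sum_(i < d) `|u| ^+ 2.
  apply: ler_sum => i _; rewrite -expr2 -real_normK ?num_real //.
  rewrite lerXn2r ?nnegrE //.
  change (`|u ord0 i| <= mx_norm u); rewrite mx_normrE.
  by apply: (le_trans _ (le_bigmax _ _ (ord0, i))).
apply: (le_trans H); rewrite sumr_const card_ord -mulr_natl.
have h0 := sqr_ge0 `|u|.
have : d%:R <= (d%:R ^+ 2 : R).
  case: (d) => [|d0]; first by rewrite expr0n.
  by rewrite expr2 ler_peMl // ler1n.
nra.
Qed.

End Eucl.

Set Implicit Arguments. Unset Strict Implicit.
Section Topo.
Context {R : realType}.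

Lemma nbhs_normv d (p : 'rV[R]_d) e : 0 < e -> nbhs p [set v | normv (v - p) < e].
Proof.
move=> e0; have d0 : (0 : R) <= d%:R by [].
have dp : (0:R) < d%:R + 1 by lra.
apply/nbhs_ballP; exists (e / (d%:R + 1)).
  by rewrite /= divr_gt0.
move=> v; rewrite -ball_normE /= => H.
have nr := normr_ge0 (p - v).
have := normv_le_mxnorm (v - p).
rewrite -normrN opprB.
have H1 : `|p - v| * (d%:R + 1) < e by rewrite -ltr_pdivlMr.
nra.
Qed.

Lemma nbhs_normvP d (p : 'rV[R]_d) (A : set 'rV[R]_d) :
  nbhs p A -> exists2 e, 0 < e & forall v, normv (v - p) < e -> A v.
Proof.
move=> /nbhs_ballP [e e0 H]; exists e => // v Hv; apply: H.
rewrite -ball_normE /= -normrN opprB.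
exact: le_lt_trans (mxnorm_le_normv _) Hv.
Qed.

Lemma clusterP d (u : nat -> 'rV[R]_d) p :
  (forall e, 0 < e -> forall N, exists k, (N <= k)%N /\ normv (u k - p) < e) ->
  cluster_points u p.
Proof.
move=> H.
have H' : forall jN : nat * nat, exists k, (jN.2 <= k)%N /\ normv (u k - p) < jN.1.+1%:R^-1.
  by move=> [j N]; apply: H.
have [G HG] := choice H'.
pose phi := fix phi j := if j is j'.+1 then G (j, (phi j').+1) else G (0%N, 0%N).
exists phi; split.
  by move=> j /=; have [] := HG (j.+1, (phi j).+1).
move=> e e0.
have [N HN] : exists N : nat, N.+1%:R^-1 < e.
  exists (Num.trunc e^-1); rewrite invf_plt ?posrE //.
  by rewrite truncnS_gt.
exists N => k Hk.
have : normv (u (phi k) - p) < k.+1%:R^-1.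
  by case: k Hk => [|k] _ /=; [have [] := HG (0%N, 0%N) | have [] := HG (k.+1, (phi k).+1)].
move=> /lt_le_trans; apply; apply: le_trans (ltW HN).
by rewrite lef_pV2 ?posrE // ler_nat.
Qed.

Lemma phi_ge (phi : nat -> nat) : (forall j, (phi j < phi j.+1)%N) -> forall j, (j <= phi j)%N.
Proof. by move=> H; elim=> [|j IH] //; apply: leq_ltn_trans IH (H j). Qed.

Lemma clusterP' d (u : nat -> 'rV[R]_d) p : cluster_points u p ->
  forall e, 0 < e -> forall N, exists k, (N <= k)%N /\ normv (u k - p) < e.
Proof.
move=> [phi [Hphi Hc]] e e0 N.
have [M HM] := Hc e e0.
exists (phi (maxn N M)); split; last by apply: HM; rewrite leq_maxr.

exact: leq_trans (leq_maxl N M) (phi_ge Hphi _).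
Qed.

Lemma cluster_bound d (u : nat -> 'rV[R]_d) B p :
  (forall k, normv (u k) <= B) -> cluster_points u p -> normv p <= B.
Proof.
move=> HB Hp; apply/ler_addgt0Pr => e e0.
have [k [_ Hk]] := clusterP' Hp e0 0.
have := normvD (u k) (p - u k); rewrite addrC subrK normvB.
have := HB k; lra.
Qed.

Lemma cluster_closed d (u : nat -> 'rV[R]_d) : closed (cluster_points u).
Proof.
move=> p Hp; apply: clusterP => e e0 N.
have e20 : 0 < e / 2 by rewrite divr_gt0.
have [c [Cc Hc]] := Hp _ (nbhs_normv p e20).
have [k [Nk Hk]] := clusterP' Cc e20 N.
exists k; split => //.
apply: le_lt_trans (normv_sub_le _ c _) _.
move: Hc; rewrite /= => Hc; lra.
Qed.

Lemma BW d (u : nat -> 'rV[R]_d) B : (forall k, normv (u k) <= B) ->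
  cluster_points u !=set0.
Proof.
move=> HB.
pose K := closed_ball (0 : 'rV[R]_d) (B + 1).
have B0 : 0 <= B by apply: le_trans (normv_ge0 (u 0%N)) (HB 0%N).
have B1 : 0 < B + 1 by lra.
have Kc : compact K.
  apply: bounded_closed_compact; last exact: closed_ball_closed.
  exists (B + 1); split; first exact: num_real.
  move=> x Bx v; rewrite /K closed_ballE // /= => Hv; move: Hv; rewrite /closed_ball_ /= sub0r normrN => Hv.
  exact: le_trans Hv (ltW Bx).
have FK : (u @ \oo) K.
  exists 0%N => // k _ /=; rewrite /K closed_ballE // /closed_ball_ /= sub0r normrN.
  by apply: le_trans (mxnorm_le_normv _) _; apply: le_trans (HB k) _; rewrite lerDl.
have [p [_ Hp]] := Kc _ _ FK.
exists p; apply: clusterP => e e0 N.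
have [w [[k /= Nk <-] Hw]] := Hp [set u k | k in [set k | (N <= k)%N]] _ 
  (ex_intro2 _ _ N I (fun k Hk => ex_intro2 _ _ k Hk erefl)) (nbhs_normv p e0).
by exists k.
Qed.

Lemma cluster_compact d (u : nat -> 'rV[R]_d) B : (forall k, normv (u k) <= B) ->
  compact (cluster_points u).
Proof.
move=> HB; apply: bounded_closed_compact; last exact: cluster_closed.
exists B; split; first exact: num_real.
move=> x Bx p Hp; apply: le_trans (mxnorm_le_normv _) _.
apply: le_trans (cluster_bound HB Hp) (ltW Bx).
Qed.

Lemma dist_cvg d (u : nat -> 'rV[R]_d) B : (forall k, normv (u k) <= B) ->
  cvgr (fun k => distv (u k) (cluster_points u)) 0.
Proof.
move=> HB e e0.
have hlb : forall k, has_lbound [set normv (u k - s) | s in cluster_points u].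
  by move=> k; exists 0 => _ [s _ <-]; exact: normv_ge0.
have dge0 : forall k, 0 <= distv (u k) (cluster_points u).
  move=> k; have [p Cp] := BW HB.
  rewrite /distv; apply: lb_le_inf; first by exists (normv (u k - p)), p.
  by move=> _ [s _ <-]; exact: normv_ge0.
apply: contrapT => Hn.
have Hn' : forall N, exists k, (N <= k)%N /\ e <= distv (u k) (cluster_points u).
  move=> N; apply: contrapT => HN; apply: Hn; exists N => k Nk.
  rewrite subr0 ger0_norm ?dge0 //; rewrite ltNge; apply/negP => Hk.
  by apply: HN; exists k.
have [G HG] := choice Hn'.
pose psi := fix psi j := if j is j'.+1 then G (psi j').+1 else G 0%N.
have psiS : forall j, (psi j < psi j.+1)%N by move=> j /=; have [] := HG (psi j).+1.
have psiP : forall j, e <= distv (u (psi j)) (cluster_points u).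
  by case=> [|j] /=; [have [] := HG 0%N | have [] := HG (psi j).+1].
have [p Cp] := BW (fun j => HB (psi j)).
have [k [_ Hk]] := clusterP' Cp e0 0.
have Cp' : cluster_points u p.
  apply: clusterP => e' e0' N.
  have [j [Nj Hj]] := clusterP' Cp e0' N.
  exists (psi j); split => //; exact: leq_trans Nj (phi_ge psiS j).
have := psiP k.
have : distv (u (psi k)) (cluster_points u) <= normv (u (psi k) - p).
  rewrite /distv; apply: inf_lbound; last by exists p.
  by exists 0 => _ [s _ <-]; exact: normv_ge0.
lra.
Qed.

End Topo.

Set Implicit Arguments. Unset Strict Implicit.
Section Calc.
Context {R : realType}.

Lemma addsubK d (y v : 'rV[R]_d) : y + v - y = v.
Proof. by rewrite addrC addKr. Qed.

Lemma posmin (a b : R) : 0 < a -> 0 < b -> exists c, [/\ 0 < c, c <= a & c <= b].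
Proof.
move=> a0 b0; exists (Num.min a b); split; rewrite ?lt_min ?a0 ?b0 //.
  by rewrite ge_min lexx. by rewrite ge_min lexx orbT.
Qed.

Lemma grad_cont d (F : 'rV[R]_d -> R) G : has_grad F G ->
  forall x e, 0 < e -> exists2 del, 0 < del &
    forall y, normv (y - x) < del -> `|F y - F x| < e.
Proof.
move=> HG x e e0.
have [del1 del10 H1] := HG x 1 ltr01.
have ng := normv_ge0 (G x).
have e'0 : 0 < e / (normv (G x) + 1) by rewrite divr_gt0 //; lra.
have [del [del0 dl1 dl2]] := posmin del10 e'0.
exists del => // y Hy.
have := H1 y (lt_le_trans Hy dl1).
have := CS (G x) (y - x).
have ny := normv_ge0 (y - x).
have : normv (y - x) * (normv (G x) + 1) < e.
  rewrite -ltr_pdivlMr; last lra.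
  exact: lt_le_trans Hy dl2.
set a := F y - F x; set b := dotv _ _.
move=> h1 h2 h3.
have : `|a| <= `|a - b| + `|b|.
  by have := ler_normD (a - b) b; rewrite subrK.
lra.
Qed.

Lemma creep (P : R -> R) eps : 0 < eps ->
  (forall s, 0 <= s <= 1 -> exists2 del, 0 < del & forall t, 0 <= t <= 1 -> `|t - s| < del ->
     (s <= t -> P t <= P s + eps * (t - s)) /\ (t <= s -> P s <= P t + eps * (s - t))) ->
  P 1 <= P 0 + eps.
Proof.
move=> e0 H.
pose S := [set t : R | 0 <= t <= 1 /\ P t <= P 0 + eps * t].
have S0 : S 0 by split; rewrite ?lexx ?ler01 // mulr0 addr0.
have Sub : ubound S 1 by move=> t [/andP[]].
have hs : has_sup S by split; [exists 0 | exists 1].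
set s := sup S.
have s0 : 0 <= s by apply: sup_upper_bound.
have s1 : s <= 1 by apply: ge_sup => //; exists 0.
have [del del0 Hd] := H s (introT andP (conj s0 s1)).
have Ss : S s.
  have [t St Ht] := sup_adherent del0 hs.
  have ts : t <= s by apply: sup_upper_bound.
  case: St => /andP[t0 t1] Pt.
  have := (Hd t (introT andP (conj t0 t1))).
  rewrite ler0_norm ?subr_le0 //.
  move=> /(_ _) [|_ /(_ ts) Hst]; first by rewrite /s in Ht *; lra.
  split; first by rewrite s0 s1.
  lra.
have [s1'|] := eqVneq s 1; first by move: Ss; rewrite s1' => -[_]; rewrite mulr1.
move=> sn1.
have sl1 : s < 1 by rewrite lt_neqAle sn1 s1.
pose t := Num.min (s + del / 2) 1.
have del20 : 0 < del / 2 by rewrite divr_gt0.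
have ht1 : t <= 1 by rewrite /t ge_min lexx orbT.
have ht2 : t <= s + del / 2 by rewrite /t ge_min lexx.
have ht3 : s < t by rewrite /t lt_min sl1 andbT; lra.
have St : S t.
  case: Ss => _ Ps.
  have := Hd t.
  move=> /(_ _ _) [||Hst _].
  - by apply/andP; split; lra.
  - by rewrite ger0_norm; lra.
  split; first by apply/andP; split; lra.
  have := Hst (ltW ht3); lra.
have := sup_upper_bound hs St; rewrite -/s; lra.
Qed.

Lemma descent d (F : 'rV[R]_d -> R) G c : has_grad F G -> lipschitzv G c ->
  forall x y, F x - F y - dotv (G y) (x - y) <= c / 2 * normv (x - y) ^+ 2.
Proof.
move=> HF HL x y.
set dd := x - y.
have [nd0|ndn0] := eqVneq (normv dd) 0.
  have xy : x = y by apply/eqP; rewrite -subr_eq0; apply/eqP; exact: normv_eq0 nd0.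
  by rewrite /dd xy !subrr dotv0r normv0 expr0n /= mulr0 subr0.
set nd := normv dd.
have nd0 : 0 < nd by rewrite lt_def ndn0 normv_ge0.
have c0 : 0 <= c.
  have := HL x y; rewrite -/dd -/nd => H.
  have := normv_ge0 (G x - G y).
  move=> H0; have : 0 <= c * nd by lra.
  by rewrite pmulr_lge0.
pose P t := F (y + t *: dd) - F y - t * dotv (G y) dd - c / 2 * t ^+ 2 * nd ^+ 2.
have P0 : P 0 = 0 by rewrite /P scale0r addr0 !mul0r expr0n /= mulr0 mul0r !subrr; lra.
have P1 : P 1 = F x - F y - dotv (G y) dd - c / 2 * nd ^+ 2.
  rewrite /P; have -> : y + 1 *: dd = x by rewrite scale1r /dd addrC subrK.
  by rewrite /P mul1r expr1n mulr1 /dd.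
suff : forall eps, 0 < eps -> P 1 <= eps.
  by rewrite P1 => H; apply/ler_addgt0Pr => e e0; rewrite -lerBlDl; apply: le_trans (H e e0) _; lra.
move=> eps e0.
have := @creep P eps e0; rewrite P0 add0r; apply.
move=> s /andP[s0 s1].
set w := y + s *: dd.
have e'0 : 0 < eps / (2 * (nd + 1)) by rewrite divr_gt0 //; lra.
set e' := eps / (2 * (nd + 1)).
have he' : e' * nd <= eps / 2.
  rewrite /e' -mulrA; rewrite ler_pM2l //.
  rewrite invfM -[X in _ <= X]mulr1 -mulrA ler_pM2l ?invr_gt0 //.
  rewrite ler_pdivrMl; lra.
have [del0 del00 Hd] := HF w e' e'0.
have a0 : 0 < del0 / (nd + 1) by rewrite divr_gt0 //; lra.
have b0 : 0 < eps / (c * nd ^+ 2 + 1).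
  by rewrite divr_gt0 //; have := mulr_ge0 c0 (sqr_ge0 nd); lra.
have [del [dl0 dl1 dl2]] := posmin a0 b0.
exists del => // t /andP[t0 t1] Htd.
set r := t - s.
have yt : y + t *: dd = w + r *: dd.
  by rewrite /w /r scalerBl addrCA addrK addrC.
have nr : normv (w + r *: dd - w) = `|r| * nd.
  by rewrite addrC addKr normvZ.
have Hr : `|r| * nd < del0.
  have : `|r| * (nd + 1) < del0.
    by rewrite -ltr_pdivlMr; [exact: lt_le_trans Htd dl1 | lra].
  have := normr_ge0 r; lra.
have wr : w + r *: dd - w = r *: dd by rewrite addrC addKr.
have HE := Hd (w + r *: dd); rewrite wr normvZ -/nd in HE; have {HE}HE := HE Hr.
have HX : `|dotv (G w) dd - dotv (G y) dd| <= c * s * nd ^+ 2.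
  rewrite -dotvBl; apply: le_trans (CS _ _) _.
  have wy : w - y = s *: dd by rewrite /w addrC addKr.
  have := HL w y; rewrite wy normvZ ger0_norm // => H.
  rewrite -/nd expr2 mulrA; apply: ler_wpM2r; first exact: normv_ge0.
  by move: H; rewrite -/nd mulrA.
have Hrc : `|r| * (c * nd ^+ 2) <= eps.
  have H1 : `|r| * (c * nd ^+ 2 + 1) <= eps.
    by rewrite -ler_pdivlMr; [exact: ltW (lt_le_trans Htd dl2)| have := mulr_ge0 c0 (sqr_ge0 nd); lra].
  have := normr_ge0 r; lra.
have Pt : P t - P s = (F (w + r *: dd) - F w - dotv (G w) (r *: dd))
   + r * (dotv (G w) dd - dotv (G y) dd) - c / 2 * r * (2 * s + r) * nd ^+ 2.
  rewrite /P -yt /w dotvZr /r; ring.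
move: HE HX Hrc Pt; rewrite dotvZr.
set E1 := F (w + r *: dd) - F w - r * dotv (G w) dd.
set X := dotv (G w) dd - dotv (G y) dd.
move=> HE HX Hrc Pt.
have nd2 : 0 <= nd ^+ 2 := sqr_ge0 nd.
have csn : 0 <= c * s * nd ^+ 2 by rewrite mulr_ge0 // mulr_ge0.
have HX' := HX; rewrite ler_norml in HX'; case/andP: HX' => HX1 HX2.
split => Hts.
- have r0 : 0 <= r by rewrite /r subr_ge0.
  rewrite (ger0_norm r0) in HE Hrc.
  have : r * X <= r * (c * s * nd ^+ 2) by rewrite ler_wpM2l.
  have : 0 <= c / 2 * r * r * nd ^+ 2.
    have c20 : 0 <= c / 2 by rewrite divr_ge0.
    by rewrite mulr_ge0 // mulr_ge0 // mulr_ge0.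
  have : c / 2 * r * (2 * s + r) * nd ^+ 2 = r * (c * s * nd ^+ 2) + c / 2 * r * r * nd ^+ 2.
    by field.
  have := ler_wpM2l r0 he'.
  have : 0 <= eps * r by rewrite mulr_ge0 // ltW.
  have : t - s = r by [].
  move: HE; rewrite ler_norml => /andP[_ HE].
  lra.
- have r0 : r <= 0 by rewrite /r subr_le0.
  rewrite (ler0_norm r0) in HE Hrc.
  have : - r * X <= - r * (c * s * nd ^+ 2) by rewrite ler_wpM2l ?oppr_ge0.
  have : c / 2 * r * (2 * s + r) * nd ^+ 2 = r * (c * s * nd ^+ 2) + (- r) * (c * nd ^+ 2) * (- r) / 2.
    by field.
  have : (- r) * (c * nd ^+ 2) * (- r) <= eps * (- r).
    by apply: ler_wpM2r => //; rewrite oppr_ge0.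
  rewrite (_ : s - t = - r); last by rewrite /r opprB.
  have := ler_wpM2l (ltac:(by rewrite oppr_ge0) : 0 <= - r) he'.
  have : 0 <= eps * - r by apply: mulr_ge0; [exact: ltW | rewrite oppr_ge0].
  move: HE; rewrite ler_norml => /andP[HE _].
  lra.
Qed.

Lemma bregman_lb d (phi : 'rV[R]_d -> R) dphi theta : has_grad phi dphi ->
  strongly_convex phi theta ->
  forall x y, theta / 2 * normv (x - y) ^+ 2 <= bregman phi dphi x y.
Proof.
move=> HG HC x y.
set dd := x - y; set nd := normv dd.
have nd0 : 0 <= nd := normv_ge0 dd.
apply/ler_addgt0Pr => eps e0.
have e'0 : 0 < eps / (2 * (nd + 1)) by rewrite divr_gt0 //; lra.
set e' := eps / (2 * (nd + 1)).
have he' : e' * nd <= eps / 2.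
  rewrite /e' -mulrA; rewrite ler_pM2l //.
  rewrite invfM -[X in _ <= X]mulr1 -mulrA ler_pM2l ?invr_gt0 //.
  rewrite ler_pdivrMl; lra.
have [del0 del00 Hd] := HG y e' e'0.
have a0 : 0 < del0 / (nd + 1) by rewrite divr_gt0 //; lra.
have b0 : 0 < eps / (2 * (`|theta| * nd ^+ 2 + 1)).
  by rewrite divr_gt0 //; have := mulr_ge0 (normr_ge0 theta) (sqr_ge0 nd); lra.
have [t1 [t10 t11 t12]] := posmin a0 b0.
have [t [t0 tt tle1]] := posmin t10 ltr01.
have ht1 : t * (nd + 1) <= del0.
  rewrite -ler_pdivlMr; last lra.
  exact: le_trans tt t11.
have ht2 : t * (2 * (`|theta| * nd ^+ 2 + 1)) <= eps.
  rewrite -ler_pdivlMr; first exact: le_trans tt t12.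
  by have := mulr_ge0 (normr_ge0 theta) (sqr_ge0 nd); lra.
have Hy := Hd (y + t *: dd).
rewrite !addsubK normvZ gtr0_norm // -/nd dotvZr in Hy.
have {Hy}Hy := Hy ltac:(lra).
have Hc := HC x y t ltac:(by rewrite (ltW t0) tle1).
have ex : t *: x + (1 - t) *: y = y + t *: dd.
  by apply/rowP => i; rewrite /dd !mxE; ring.
rewrite ex in Hc.
have n1 : normv (y + t *: dd) ^+ 2 = normv y ^+ 2 + 2 * t * dotv y dd + t ^+ 2 * nd ^+ 2.
  rewrite /nd /dd !normv_sqr !(dotvDl, dotvDr, dotvZl, dotvZr, dotvNl, dotvNr) (dotvC x y); ring.
have n2 : normv x ^+ 2 = normv y ^+ 2 + 2 * dotv y dd + nd ^+ 2.
  rewrite /nd /dd !normv_sqr !(dotvDl, dotvDr, dotvZl, dotvZr, dotvNl, dotvNr) (dotvC x y); ring.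
rewrite n1 n2 in Hc.
rewrite /bregman -/dd.
move: Hy Hc; set A := phi (y + t *: dd); set Dp := dotv (dphi y) dd.
move=> Hy Hc.
move: Hy; rewrite ler_norml => /andP[Hy _].
have key : t * (Dp - e' * nd - theta / 2 * t * nd ^+ 2) <= t * (phi x - phi y - theta / 2 * nd ^+ 2).
  have -> : t * (Dp - e' * nd - theta / 2 * t * nd ^+ 2) = t * Dp - e' * (t * nd) - theta / 2 * t ^+ 2 * nd ^+ 2 by ring.
  have -> : t * (phi x - phi y - theta / 2 * nd ^+ 2) = t * (phi x - theta / 2 * (normv y ^+ 2 + 2 * dotv y dd + nd ^+ 2)) +
     (1 - t) * (phi y - theta / 2 * normv y ^+ 2) - phi y + theta / 2 * normv y ^+ 2 + theta * t * dotv y dd by field.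
  lra.
rewrite ler_pM2l // in key.
have : theta / 2 * t * nd ^+ 2 <= eps / 2.
  have : theta / 2 * t * nd ^+ 2 <= `|theta| * nd ^+ 2 * t / 2.
    have tn : 0 <= t * nd ^+ 2 by apply: mulr_ge0; [exact: ltW | exact: sqr_ge0].
    have := ler_wpM2r tn (ler_norm theta); lra.
  have := mulr_ge0 (normr_ge0 theta) (sqr_ge0 nd); lra.
lra.
Qed.

End Calc.

Set Implicit Arguments. Unset Strict Implicit.
Section Seqs.
Context {R : realType}.

Lemma small_inv (e : R) : 0 < e -> exists N : nat, forall k, (N <= k)%N -> k.+1%:R^-1 < e.
Proof.
move=> e0; exists (Num.trunc e^-1) => k Hk.
rewrite invf_plt ?posrE //; apply: lt_le_trans (truncnS_gt _) _.
by rewrite ler_nat.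
Qed.

Lemma cvgv_close d (X Y : nat -> 'rV[R]_d) p :
  (forall k, normv (X k - Y k) < k.+1%:R^-1) -> cvgv Y p -> cvgv X p.
Proof.
move=> H HY e e0.
have e20 : 0 < e / 2 by rewrite divr_gt0.
have [N1 H1] := HY _ e20; have [N2 H2] := small_inv e20.
exists (maxn N1 N2) => k Hk.
have := H1 k (leq_trans (leq_maxl _ _) Hk); have := H2 k (leq_trans (leq_maxr _ _) Hk).
have := normv_sub_le (X k) (Y k) p; have := H k; move: (k.+1%:R^-1 : R) => t; lra.
Qed.

Lemma cvgr_close (X Y : nat -> R) p :
  (forall k, `|X k - Y k| < k.+1%:R^-1) -> cvgr Y p -> cvgr X p.
Proof.
move=> H HY e e0.
have e20 : 0 < e / 2 by rewrite divr_gt0.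
have [N1 H1] := HY _ e20; have [N2 H2] := small_inv e20.
exists (maxn N1 N2) => k Hk.
have := H1 k (leq_trans (leq_maxl _ _) Hk); have := H2 k (leq_trans (leq_maxr _ _) Hk).
have : `|X k - p| <= `|X k - Y k| + `|Y k - p|.
  by have := ler_normD (X k - Y k) (Y k - p); rewrite addrA subrK.
have := H k; move: (k.+1%:R^-1 : R) => t; lra.
Qed.

Lemma cvgvD d (u w : nat -> 'rV[R]_d) a b : cvgv u a -> cvgv w b ->
  cvgv (fun k => u k + w k) (a + b).
Proof.
move=> Hu Hw e e0.
have e20 : 0 < e / 2 by rewrite divr_gt0.
have [N1 H1] := Hu _ e20; have [N2 H2] := Hw _ e20.
exists (maxn N1 N2) => k Hk.
have := H1 k (leq_trans (leq_maxl _ _) Hk); have := H2 k (leq_trans (leq_maxr _ _) Hk).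
have -> : u k + w k - (a + b) = (u k - a) + (w k - b) by apply/rowP => i; rewrite !mxE; ring.
have := normvD (u k - a) (w k - b); lra.
Qed.

Lemma cvgrD (u w : nat -> R) a b : cvgr u a -> cvgr w b ->
  cvgr (fun k => u k + w k) (a + b).
Proof.
move=> Hu Hw e e0.
have e20 : 0 < e / 2 by rewrite divr_gt0.
have [N1 H1] := Hu _ e20; have [N2 H2] := Hw _ e20.
exists (maxn N1 N2) => k Hk.
have := H1 k (leq_trans (leq_maxl _ _) Hk); have := H2 k (leq_trans (leq_maxr _ _) Hk).
have -> : u k + w k - (a + b) = (u k - a) + (w k - b) by ring.
have := ler_normD (u k - a) (w k - b); lra.
Qed.

Lemma lsubmxB n m (u w : 'rV[R]_(n + m)) : lsubmx u - lsubmx w = lsubmx (u - w).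
Proof. by apply/rowP => i; rewrite !mxE. Qed.
Lemma rsubmxB n m (u w : 'rV[R]_(n + m)) : rsubmx u - rsubmx w = rsubmx (u - w).
Proof. by apply/rowP => i; rewrite !mxE. Qed.

Lemma normv_lsubB n m (u w : 'rV[R]_(n + m)) : normv (lsubmx u - lsubmx w) <= normv (u - w).
Proof. by rewrite lsubmxB normv_lsub. Qed.
Lemma normv_rsubB n m (u w : 'rV[R]_(n + m)) : normv (rsubmx u - rsubmx w) <= normv (u - w).
Proof. by rewrite rsubmxB normv_rsub. Qed.

Lemma cvgv_lsub n m (u : nat -> 'rV[R]_(n + m)) a : cvgv u a ->
  cvgv (fun k => lsubmx (u k)) (lsubmx a).
Proof.
move=> H e e0; have [N HN] := H e e0; exists N => k /HN.
exact: le_lt_trans (normv_lsubB _ _).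
Qed.
Lemma cvgv_rsub n m (u : nat -> 'rV[R]_(n + m)) a : cvgv u a ->
  cvgv (fun k => rsubmx (u k)) (rsubmx a).
Proof.
move=> H e e0; have [N HN] := H e e0; exists N => k /HN.
exact: le_lt_trans (normv_rsubB _ _).
Qed.

Lemma row_mxB n m (x x' : 'rV[R]_n) (y y' : 'rV[R]_m) :
  row_mx x y - row_mx x' y' = row_mx (x - x') (y - y').
Proof. by rewrite opp_row_mx add_row_mx. Qed.

Lemma cvgv_row n m (u : nat -> 'rV[R]_n) (w : nat -> 'rV[R]_m) a b :
  cvgv u a -> cvgv w b -> cvgv (fun k => row_mx (u k) (w k)) (row_mx a b).
Proof.
move=> Hu Hw e e0.
have e20 : 0 < e / 2 by rewrite divr_gt0.
have [N1 H1] := Hu _ e20; have [N2 H2] := Hw _ e20.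
exists (maxn N1 N2) => k Hk.
have := H1 k (leq_trans (leq_maxl _ _) Hk); have := H2 k (leq_trans (leq_maxr _ _) Hk).
rewrite row_mxB; have := normv_row_le (u k - a) (w k - b); lra.
Qed.

Lemma cvgv_cont d p (G : 'rV[R]_d -> 'rV[R]_p) u a : contv G -> cvgv u a ->
  cvgv (fun k => G (u k)) (G a).
Proof.
move=> HG Hu e e0; have [del del0 Hd] := HG a e e0.
have [N HN] := Hu del del0; exists N => k /HN; exact: Hd.
Qed.

Lemma cvgr_cont d (F : 'rV[R]_d -> R) u a :
  (forall e, 0 < e -> exists2 del, 0 < del & forall y, normv (y - a) < del -> `|F y - F a| < e) ->
  cvgv u a -> cvgr (fun k => F (u k)) (F a).
Proof.
move=> HG Hu e e0; have [del del0 Hd] := HG e e0.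
have [N HN] := Hu del del0; exists N => k /HN; exact: Hd.
Qed.

Lemma cvgr_unique (u : nat -> R) a b : cvgr u a -> cvgr u b -> a = b.
Proof.
move=> Ha Hb; apply/eqP; rewrite -subr_eq0 -normr_eq0; apply/eqP.
apply/le_anti; rewrite normr_ge0 andbT; apply/ler_addgt0Pr => e e0; rewrite add0r.
have e20 : 0 < e / 2 by rewrite divr_gt0.
have [N1 H1] := Ha _ e20; have [N2 H2] := Hb _ e20.
have := H1 (maxn N1 N2) (leq_maxl _ _); have := H2 (maxn N1 N2) (leq_maxr _ _).
have : `|a - b| <= `|a - u (maxn N1 N2)| + `|u (maxn N1 N2) - b|.
  by have := ler_normD (a - u (maxn N1 N2)) (u (maxn N1 N2) - b); rewrite addrA subrK.
rewrite (distrC a (u _)); lra.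
Qed.

Lemma cvgr_sub (u : nat -> R) a (phi : nat -> nat) : (forall j, (j <= phi j)%N) ->
  cvgr u a -> cvgr (fun j => u (phi j)) a.
Proof. move=> Hp H e e0; have [N HN] := H e e0; exists N => k Hk; apply: HN; exact: leq_trans Hk (Hp k). Qed.

Lemma cvgr_shift (u : nat -> R) a : cvgr (fun k => u k.+1) a -> cvgr u a.
Proof. move=> H e e0; have [N HN] := H e e0; exists N.+1 => -[|k] // Hk; exact: HN. Qed.

Lemma cvgv_cst d (a : 'rV[R]_d) : cvgv (fun _ => a) a.
Proof. by move=> e e0; exists 0%N => k _; rewrite subrr normv0. Qed.

Lemma cvgr_cst (a : R) : cvgr (fun _ => a) a.
Proof. by move=> e e0; exists 0%N => k _; rewrite subrr normr0. Qed.

Lemma frechet_lim d (F : 'rV[R]_d -> \bar R) x v : frechet_sub F x v -> lim_sub F x v.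
Proof.
move=> H; split; first by case: H.
exists (fun _ => x), (fun _ => v); split => //; [exact: cvgv_cst | exact: cvgr_cst | exact: cvgv_cst].
Qed.

Lemma lim_sub_closed d (F : 'rV[R]_d -> \bar R) (a b : nat -> 'rV[R]_d) p v :
  F p \is a fin_num -> (forall j, lim_sub F (a j) (b j)) -> cvgv a p ->
  cvgr (fun j => fine (F (a j))) (fine (F p)) -> cvgv b v -> lim_sub F p v.
Proof.
move=> Fp Hl Ha Hf Hb.
have H : forall j, exists xv : 'rV[R]_d * 'rV[R]_d, [/\ frechet_sub F xv.1 xv.2,
    normv (xv.1 - a j) < j.+1%:R^-1, `|fine (F xv.1) - fine (F (a j))| < j.+1%:R^-1 &
    normv (xv.2 - b j) < j.+1%:R^-1].
  move=> j; have [_ [xs [vs [Hx Hfr Hfs Hv]]]] := Hl j.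
  have e0 : (0 : R) < j.+1%:R^-1 by rewrite invr_gt0.
  have [N1 H1] := Hx _ e0; have [N2 H2] := Hfr _ e0; have [N3 H3] := Hv _ e0.
  exists (xs (maxn N1 (maxn N2 N3)), vs (maxn N1 (maxn N2 N3))); split => //=.
  - by apply: H1; rewrite leq_maxl.
  - by apply: H2; rewrite (leq_trans _ (leq_maxr _ _)) // leq_maxl.
  - by apply: H3; rewrite (leq_trans _ (leq_maxr _ _)) // leq_maxr.
have [G HG] := choice H.
split => //; exists (fun j => (G j).1), (fun j => (G j).2); split.
- by apply: cvgv_close Ha => k; have [] := HG k.
- by apply: cvgr_close Hf => k; have [] := HG k.
- by move=> k; have [] := HG k.
- by apply: cvgv_close Hb => k; have [] := HG k.
Qed.

End Seqs.

Set Implicit Arguments. Unset Strict Implicit.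
Section Sum.
Context {R : realType}.

Lemma fineL (a b : R) (X : \bar R) : X \is a fin_num ->
  fine (a%:E + X + b%:E)%E = a + fine X + b.
Proof. by case: X. Qed.

Lemma dotv_rowsplit n m (b a : 'rV[R]_(n + m)) (A : 'rV[R]_n) (B : 'rV[R]_m) :
  dotv (b + row_mx A B) a = dotv b a + dotv A (lsubmx a) + dotv B (rsubmx a).
Proof. by rewrite dotvDl (@dotv_split R n m (row_mx A B)) row_mxKl row_mxKr addrA. Qed.

Lemma frechet_sum n m (f : 'rV[R]_n -> R) gf (g : 'rV[R]_m -> R) gg
  (Q : 'rV[R]_n -> 'rV[R]_m -> \bar R) a b :
  has_grad f gf -> has_grad g gg -> frechet_sub (uncurryv Q) a b ->
  frechet_sub (uncurryv (Lobj f Q g)) a (b + row_mx (gf (lsubmx a)) (gg (rsubmx a))).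
Proof.
move=> Hf Hg [Hfin Hin]; rewrite /uncurryv /Lobj in Hfin Hin *.
have [qa Eqa] : exists qa, Q (lsubmx a) (rsubmx a) = qa%:E.
  by move: Hfin; case: (Q _ _) => // r _; exists r.
split; first by rewrite Eqa.
move=> e e0.
have e30 : 0 < e / 3 by rewrite divr_gt0.
have [dq dq0 HQ] := Hin _ e30.
have [df df0 Hf'] := Hf (lsubmx a) _ e30.
have [dg dg0 Hg'] := Hg (rsubmx a) _ e30.
have [d1 [d10 d1q d1f]] := posmin dq0 df0.
have [del [del0 dl1 dlg]] := posmin d10 dg0.
exists del => // w Hw.
have Hwq : normv (w - a) < dq by lra.
have Hwl : normv (lsubmx w - lsubmx a) < df.
  by apply: le_lt_trans (normv_lsubB _ _) _; lra.
have Hwr : normv (rsubmx w - rsubmx a) < dg.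
  by apply: le_lt_trans (normv_rsubB _ _) _; lra.
have := HQ w Hwq; rewrite Eqa.
case EQw : (Q (lsubmx w) (rsubmx w)) => [qw| |] HQw.
- move: HQw; rewrite -EFinD lee_fin => HQw.
  rewrite -!EFinD lee_fin.
  have := Hf' _ Hwl; have := Hg' _ Hwr.
  rewrite lsubmxB rsubmxB.
  have := @normv_lsub R n m (w - a); have := @normv_rsub R n m (w - a).
  rewrite dotv_rowsplit.
  set nw := normv (w - a); set nl := normv (lsubmx (w - a)); set nr := normv (rsubmx (w - a)).
  move=> h1 h2 h3 h4.
  have h1' : e / 3 * nr <= e / 3 * nw by rewrite ler_wpM2l // ltW.
  have h2' : e / 3 * nl <= e / 3 * nw by rewrite ler_wpM2l // ltW.
  move: h3 h4; rewrite !ler_norml => /andP[h3 _] /andP[h4 _].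
  rewrite -/nw in HQw.
  lra.
- by rewrite addey // addye // leey.
- by move: HQw; rewrite leeNy_eq -EFinD.
Qed.

Lemma grad_cont_l n m (f : 'rV[R]_n -> R) gf (z : 'rV[R]_(n + m)) : has_grad f gf ->
  forall e, 0 < e -> exists2 del, 0 < del &
    forall y, normv (y - z) < del -> `|f (lsubmx y) - f (lsubmx z)| < e.
Proof.
move=> Hf e e0; have [del del0 H] := grad_cont Hf (lsubmx z) e0.
exists del => // y Hy; apply: H; exact: le_lt_trans (normv_lsubB _ _) Hy.
Qed.

Lemma grad_cont_r n m (f : 'rV[R]_m -> R) gf (z : 'rV[R]_(n + m)) : has_grad f gf ->
  forall e, 0 < e -> exists2 del, 0 < del &
    forall y, normv (y - z) < del -> `|f (rsubmx y) - f (rsubmx z)| < e.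
Proof.
move=> Hf e e0; have [del del0 H] := grad_cont Hf (rsubmx z) e0.
exists del => // y Hy; apply: H; exact: le_lt_trans (normv_rsubB _ _) Hy.
Qed.

Lemma lim_sub_sum n m (f : 'rV[R]_n -> R) gf (g : 'rV[R]_m -> R) gg
  (Q : 'rV[R]_n -> 'rV[R]_m -> \bar R) z v :
  has_grad f gf -> contv gf -> has_grad g gg -> contv gg ->
  lim_sub (uncurryv Q) z v ->
  lim_sub (uncurryv (Lobj f Q g)) z (v + row_mx (gf (lsubmx z)) (gg (rsubmx z))).
Proof.
move=> Hf Hfc Hg Hgc [Hfin [xs [vs [Hx Hfr Hfs Hv]]]].
split; first by move: Hfin; rewrite /uncurryv /Lobj; case: (Q _ _).
exists xs, (fun k => vs k + row_mx (gf (lsubmx (xs k))) (gg (rsubmx (xs k)))); split => //.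
- have E : (fun k => fine (uncurryv (Lobj f Q g) (xs k))) =
     (fun k => f (lsubmx (xs k)) + fine (uncurryv Q (xs k)) + g (rsubmx (xs k))).
    apply: funext => k; rewrite /uncurryv /Lobj fineL //.
    by have [] := Hfs k.
  rewrite E /uncurryv /Lobj fineL //.
  apply: cvgrD.
    apply: cvgrD => //.
    by apply: (@cvgr_cont _ _ (fun y => f (lsubmx y)) xs z) => //; exact: grad_cont_l Hf.
  by apply: (@cvgr_cont _ _ (fun y => g (rsubmx y)) xs z) => //; exact: grad_cont_r Hg.
- by move=> k; apply: frechet_sum.
- apply: cvgvD => //; apply: cvgv_row; apply: cvgv_cont => //.
  exact: cvgv_lsub. exact: cvgv_rsub.
Qed.

End Sum.

Unset Implicit Arguments. Set Strict Implicit.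
Section Extra.
Context {R : realType}.

Lemma cvgrZ (u : nat -> R) c : cvgr u 0 -> cvgr (fun k => c * u k) 0.
Proof.
move=> H e e0.
have c1 : 0 < `|c| + 1 by have := normr_ge0 c; lra.
have [N HN] := H (e / (`|c| + 1)) (divr_gt0 e0 c1).
exists N => k /HN; rewrite !subr0 normrM => Hk.
have : `|u k| * (`|c| + 1) < e by rewrite -ltr_pdivlMr.
have := normr_ge0 (u k); have := normr_ge0 c; nra.
Qed.

Lemma squeeze d (u : nat -> 'rV[R]_d) a (r : nat -> R) :
  (forall k, normv (u k - a) <= r k) -> cvgr r 0 -> cvgv u a.
Proof.
move=> Hb Hr e e0; have [N HN] := Hr e e0; exists N => k /HN.
rewrite subr0 => Hk; apply: le_lt_trans (Hb k) _.
exact: le_lt_trans (ler_norm _) Hk.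
Qed.

Lemma ltey_addr (a : \bar R) (r : R) : (a + r%:E < +oo)%E -> (a < +oo)%E.
Proof. by case: a => [x _|H|_] //; first exact: ltry. Qed.

End Extra.

Theorem lemma3p3 (R : realType) (n m : nat)
  (f : 'rV[R]_n -> R) (gradf : 'rV[R]_n -> 'rV[R]_n)
  (g : 'rV[R]_m -> R) (gradg : 'rV[R]_m -> 'rV[R]_m)
  (Q : 'rV[R]_n -> 'rV[R]_m -> \bar R)
  (q : 'rV[R]_n -> 'rV[R]_m -> R) (gradxq : 'rV[R]_n -> 'rV[R]_m -> 'rV[R]_n)
  (h : 'rV[R]_n -> \bar R)
  (phi1 : 'rV[R]_n -> R) (dphi1 : 'rV[R]_n -> 'rV[R]_n)
  (phi2 : 'rV[R]_m -> R) (dphi2 : 'rV[R]_m -> 'rV[R]_m)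
  (Lf Lg theta1 theta2 eta1 eta2 : R)
  (* (A1) *)
  (HLbdd : exists c : R, forall x y, (c%:E <= Lobj f Q g x y)%E)
  (Hf : has_grad f gradf) (Hfc : contv gradf) (Hflip : lipschitzv gradf Lf)
  (Hg : has_grad g gradg) (Hgc : contv gradg) (Hglip : lipschitzv gradg Lg)
  (HQproper : proper_fun (uncurryv Q)) (HQlsc : lsc (uncurryv Q))
  (Hphi1 : has_grad phi1 dphi1) (Hphi2 : has_grad phi2 dphi2)
  (Hphi1sc : strongly_convex phi1 theta1) (Hphi2sc : strongly_convex phi2 theta2)
  (Htheta1 : Lf < theta1) (Htheta2 : Lg < theta2)
  (Hdphi1 : lipschitzv dphi1 eta1) (Hdphi2 : lipschitzv dphi2 eta2)
  (* (A2) *)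
  (Hcoer : forall M : R, exists r : R, forall z : 'rV[R]_(n + m),
      r < normv z -> (M%:E < uncurryv (Lobj f Q g) z)%E)
  (HdomQ : closed (domain (uncurryv Q)))
  (Hsub : forall (x : 'rV[R]_n) (y : 'rV[R]_m), (Q x y < +oo)%E ->
      forall v w, lim_sub (fun x' => Q x' y) x v -> lim_sub (fun y' => Q x y') y w ->
      lim_sub (uncurryv Q) (row_mx x y) (row_mx v w))
  (HQdec : forall x y, Q x y = ((q x y)%:E + h x)%E)
  (Hhcont : forall x, (h x < +oo)%E -> forall e : R, 0 < e -> exists2 del : R, 0 < del &
      forall x', (h x' < +oo)%E -> normv (x' - x) < del ->
        `|fine (h x') - fine (h x)| < e)
  (Hqcont : forall z : 'rV[R]_(n + m), (uncurryv Q z < +oo)%E ->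
      forall e : R, 0 < e -> exists2 del : R, 0 < del &
      forall z', (uncurryv Q z' < +oo)%E -> normv (z' - z) < del ->
        `|uncurryv q z' - uncurryv q z| < e)
  (Hq1 : forall y, has_grad (fun x => q x y) (fun x => gradxq x y))
  (Hq1c : forall y, contv (fun x => gradxq x y))
  (Hqlip : forall (D1 : set 'rV[R]_n) (D2 : set 'rV[R]_m),
      boundedv [set row_mx x y | x in D1 & y in D2] ->
      (forall x y, D1 x -> D2 y -> (Q x y < +oo)%E) ->
      exists2 xi : R, 0 < xi & forall xb y yb, D1 xb -> D2 y -> D2 yb ->
        normv (gradxq xb y - gradxq xb yb) <= xi * normv (y - yb))
  (* the algorithm *)
  (x xh : nat -> 'rV[R]_n) (y yh : nat -> 'rV[R]_m)
  (xm1 : 'rV[R]_n) (ym1 : 'rV[R]_m)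
  (alpha beta : nat -> R) (amax bmax : R)
  (Hxh0 : xh 0%N = x 0%N) (Hyh0 : yh 0%N = y 0%N)
  (Hamax : 0 <= amax) (Hbmax : 0 <= bmax) (Hab : amax + bmax < 1)
  (Halpha : forall k, 0 <= alpha k <= amax) (Hbeta : forall k, 0 <= beta k <= bmax)
  (Hxstep : forall k,
      (Q (x k.+1) (yh k) + (dotv (gradf (xh k)) (x k.+1) + bregman phi1 dphi1 (x k.+1) (xh k))%:E
        < +oo)%E /\
      forall x' : 'rV[R]_n,
      (Q (x k.+1) (yh k) + (dotv (gradf (xh k)) (x k.+1) + bregman phi1 dphi1 (x k.+1) (xh k))%:E
       <= Q x' (yh k) + (dotv (gradf (xh k)) x' + bregman phi1 dphi1 x' (xh k))%:E)%E)
  (Hystep : forall k,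
      (Q (x k.+1) (y k.+1) + (dotv (gradg (yh k)) (y k.+1) + bregman phi2 dphi2 (y k.+1) (yh k))%:E
        < +oo)%E /\
      forall y' : 'rV[R]_m,
      (Q (x k.+1) (y k.+1) + (dotv (gradg (yh k)) (y k.+1) + bregman phi2 dphi2 (y k.+1) (yh k))%:E
       <= Q (x k.+1) y' + (dotv (gradg (yh k)) y' + bregman phi2 dphi2 y' (yh k))%:E)%E)
  (Hextra : forall k,
      let xprev := if k is k'.+1 then x k' else xm1 in
      let yprev := if k is k'.+1 then y k' else ym1 in
      let u := x k.+1 + alpha k *: (x k.+1 - x k) + beta k *: (x k - xprev) in
      let v := y k.+1 + alpha k *: (y k.+1 - y k) + beta k *: (y k - yprev) in
      if (Lobj f Q g u v <= Lobj f Q g (x k.+1) (y k.+1))%E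
      then xh k.+1 = u /\ yh k.+1 = v
      else xh k.+1 = x k.+1 /\ yh k.+1 = y k.+1) :
  let z := fun k => row_mx (x k) (y k) in
  let Lz := uncurryv (Lobj f Q g) in
  let C := cluster_points z in
  [/\ (* (i) *)
      [/\ C !=set0, compact C & exists c : R, forall zh, C zh -> Lz zh = c%:E],
      (* (ii) *)
      C `<=` crit Lz &
      (* (iii) *)
      cvgr (fun k => distv (z k) C) 0].

Proof.
move=> z Lz C.
have hnoo : forall x0, h x0 != -oo%E.
  move=> x0; have := HQproper.1 (row_mx x0 0); rewrite /uncurryv row_mxKl row_mxKr HQdec.
  by case: (h x0).
pose H x0 := fine (h x0).
have Qdom : forall x0 y0, (h x0 < +oo)%E -> Q x0 y0 = (q x0 y0 + H x0)%:E.
  by move=> x0 y0; rewrite HQdec /H; have := hnoo x0; case: (h x0).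
have Qinf : forall x0 y0, (Q x0 y0 < +oo)%E -> (h x0 < +oo)%E.
  move=> x0 y0; rewrite HQdec; case: (h x0) => [r' _|H'|_] //; first exact: ltry.
pose Lr x0 y0 := f x0 + q x0 y0 + H x0 + g y0.
have Ldom : forall x0 y0, (h x0 < +oo)%E -> Lobj f Q g x0 y0 = (Lr x0 y0)%:E.
  by move=> x0 y0 hx; rewrite /Lobj Qdom // -!EFinD /Lr !addrA.
have Linf : forall x0 y0, (Lobj f Q g x0 y0 < +oo)%E -> (h x0 < +oo)%E.
  move=> x0 y0; rewrite /Lobj HQdec; case: (h x0) => [r' _|H'|_] //; first exact: ltry.
have Lzrow : forall x0 y0, Lz (row_mx x0 y0) = Lobj f Q g x0 y0.
  by move=> x0 y0; rewrite /Lz /uncurryv row_mxKl row_mxKr.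
have zE : forall k, z k = row_mx (x k) (y k) by [].
have domx : forall k, (h (x k.+1) < +oo)%E.
  move=> k; have [H1 _] := Hxstep k; apply: (Qinf _ (yh k)).
  exact: ltey_addr H1.
have Hhat : forall k, (h (xh k.+1) < +oo)%E /\ Lr (xh k.+1) (yh k.+1) <= Lr (x k.+1) (y k.+1).
  move=> k; move: (Hextra k) => /=.
  case: ifP => Hc [-> ->]; last by split; [exact: domx | exact: lexx].
  rewrite [X in (_ <= X)%E]Ldom ?domx // in Hc.
  have hu := Linf _ _ (le_lt_trans Hc (ltry _)).
  by split => //; move: Hc; rewrite Ldom // lee_fin.
pose c1 := (theta1 - Lf) / 2; pose c2 := (theta2 - Lg) / 2.
have c10 : 0 < c1 by rewrite /c1 divr_gt0 // subr_gt0.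
have c20 : 0 < c2 by rewrite /c2 divr_gt0 // subr_gt0.
have breg0 : forall d (phi : 'rV[R]_d -> R) dphi u, bregman phi dphi u u = 0.
  by move=> d phi dphi u; rewrite /bregman !subrr dotv0r subrr.
have desc : forall k, (h (xh k) < +oo)%E ->
    Lr (x k.+1) (y k.+1) + c1 * normv (x k.+1 - xh k) ^+ 2 + c2 * normv (y k.+1 - yh k) ^+ 2
    <= Lr (xh k) (yh k).
  move=> k hk.
  have HX := (Hxstep k).2 (xh k).
  rewrite !Qdom ?domx // -!EFinD lee_fin breg0 in HX.
  have HY := (Hystep k).2 (yh k).
  rewrite !Qdom ?domx // -!EFinD lee_fin breg0 in HY.
  have D1 := descent Hf Hflip (x k.+1) (xh k).
  have D2 := descent Hg Hglip (y k.+1) (yh k).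
  have B1 := bregman_lb Hphi1 Hphi1sc (x k.+1) (xh k).
  have B2 := bregman_lb Hphi2 Hphi2sc (y k.+1) (yh k).
  rewrite !dotvBr in D1 D2.
  rewrite /Lr /c1 /c2; lra.
pose ell k := Lr (x k.+1) (y k.+1).
have elldec : forall k, ell k.+1 + c1 * normv (x k.+2 - xh k.+1) ^+ 2
     + c2 * normv (y k.+2 - yh k.+1) ^+ 2 <= ell k.
  by move=> k; have [hk Hk] := Hhat k; have := desc k.+1 hk; rewrite /ell; lra.
have ellS : forall k, ell k.+1 <= ell k.
  move=> k; have := elldec k.
  have := mulr_ge0 (ltW c10) (sqr_ge0 (normv (x k.+2 - xh k.+1))).
  have := mulr_ge0 (ltW c20) (sqr_ge0 (normv (y k.+2 - yh k.+1))).
  lra.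
have ellmono : forall i j, (i <= j)%N -> ell j <= ell i.
  move=> i; elim=> [|j IH]; first by rewrite leqn0 => /eqP ->.
  rewrite leq_eqVlt => /orP[/eqP -> //|]; rewrite ltnS => /IH Hj.
  exact: le_trans (ellS j) Hj.
have [c0 Hc0] := HLbdd.
have ellb : forall k, c0 <= ell k.
  by move=> k; have := Hc0 (x k.+1) (y k.+1); rewrite Ldom ?domx // lee_fin.
pose ls := inf (range ell).
have hinf : has_inf (range ell).
  split; first by exists (ell 0%N), 0%N.
  by exists c0 => _ [k _ <-].
have lsle : forall k, ls <= ell k.
  by move=> k; apply: (ge_inf hinf.2); exists k.
have ellcv : cvgr ell ls.
  move=> e e0; have [t [K _ <-] Ht] := inf_adherent e0 hinf.
  exists K => k Hk; have := ellmono _ _ Hk; have := lsle k.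
  rewrite ger0_norm ?subr_ge0 ?lsle //; lra.
have stepx : cvgr (fun k => normv (x k.+1 - xh k)) 0.
  apply: cvgr_shift => e e0.
  have [N HN] := ellcv (c1 * e ^+ 2) (mulr_gt0 c10 (exprn_gt0 2 e0)).
  exists N => k Hk; rewrite subr0 ger0_norm ?normv_ge0 //.
  have a4 := HN k Hk; rewrite ger0_norm ?subr_ge0 ?lsle // in a4.
  have a3 := elldec k; have a2 := lsle k.+1.
  have a1 := mulr_ge0 (ltW c20) (sqr_ge0 (normv (y k.+2 - yh k.+1))).
  have : c1 * normv (x k.+2 - xh k.+1) ^+ 2 < c1 * e ^+ 2 by lra.
  rewrite ltr_pM2l // => H2.
  by rewrite -(@ltr_pXn2r _ 2) // ?nnegrE ?normv_ge0 // ltW.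
have stepy : cvgr (fun k => normv (y k.+1 - yh k)) 0.
  apply: cvgr_shift => e e0.
  have [N HN] := ellcv (c2 * e ^+ 2) (mulr_gt0 c20 (exprn_gt0 2 e0)).
  exists N => k Hk; rewrite subr0 ger0_norm ?normv_ge0 //.
  have a4 := HN k Hk; rewrite ger0_norm ?subr_ge0 ?lsle // in a4.
  have a3 := elldec k; have a2 := lsle k.+1.
  have a1 := mulr_ge0 (ltW c10) (sqr_ge0 (normv (x k.+2 - xh k.+1))).
  have : c2 * normv (y k.+2 - yh k.+1) ^+ 2 < c2 * e ^+ 2 by lra.
  rewrite ltr_pM2l // => H2.
  by rewrite -(@ltr_pXn2r _ 2) // ?nnegrE ?normv_ge0 // ltW.
have [r Hr] := Hcoer (ell 0%N).
have bnd : forall w, (Lz w <= (ell 0%N)%:E)%E -> normv w <= r.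
  move=> w Hw; rewrite leNgt; apply/negP => /Hr H'.
  by move: (lt_le_trans H' Hw); rewrite ltxx.
have bz : forall k, normv (z k.+1) <= r.
  move=> k; apply: bnd; rewrite zE Lzrow Ldom ?domx // lee_fin; exact: ellmono.
have bzh : forall k, normv (row_mx (xh k.+1) (yh k.+1)) <= r.
  move=> k; apply: bnd; rewrite Lzrow Ldom ?(Hhat k).1 // lee_fin.
  have := (Hhat k).2; have := ellmono 0%N k (leq0n k); rewrite /ell; lra.
pose B := `|r| + normv (z 0%N).
have bzall : forall k, normv (z k) <= B.
  case=> [|k]; first by rewrite /B lerDr.
  have := bz k; have := ler_norm r; have := normv_ge0 (z 0%N); rewrite /B; lra.
have byh : forall k, normv (yh k) <= B.
  case=> [|k]; first by rewrite Hyh0; apply: le_trans (bzall 0%N); rewrite zE normv_row_ger.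
  have := bzh k; have := normv_row_ger (xh k.+1) (yh k.+1).
  have := ler_norm r; have := normv_ge0 (z 0%N); rewrite /B; lra.
have byk : forall k, normv (y k) <= B.
  by move=> k; apply: le_trans (bzall k); rewrite zE normv_row_ger.
have bxk : forall k, normv (x k) <= B.
  by move=> k; apply: le_trans (bzall k); rewrite zE normv_row_gel.
have psiP : forall zh, C zh -> exists psi : nat -> nat,
    (forall j, (j <= psi j)%N) /\ cvgv (fun j => z (psi j).+1) zh.
  move=> zh [phi [Hphi Hc]]; exists (fun j => (phi j.+1).-1); split.
    move=> j; have := phi_ge Hphi j.+1; case: (phi j.+1) => [//|p] /=.
    by rewrite ltnS.
  move=> e e0; have [N HN] := Hc e e0; exists N => k Hk.
  rewrite prednK; last exact: leq_ltn_trans (leq0n _) (Hphi k).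
  by apply: HN; exact: leqW.
have domz : forall k, (uncurryv Q (z k.+1) < +oo)%E.
  by move=> k; rewrite /uncurryv zE row_mxKl row_mxKr Qdom ?domx // ltry.
have domzh : forall zh, C zh -> (h (lsubmx zh) < +oo)%E.
  move=> zh Czh; suff : domain (uncurryv Q) zh by rewrite /domain /uncurryv /= => /Qinf.
  apply: HdomQ => Bs /nbhs_normvP [e e0 HB].
  have [[|k] [Hk1 Hk]] := clusterP' Czh e0 1%N; first by [].
  by exists (z k.+1); split; [exact: domz | exact: HB].
have Lcont : forall zh (psi : nat -> nat), (h (lsubmx zh) < +oo)%E ->
    cvgv (fun j => z (psi j).+1) zh ->
    cvgr (fun j => ell (psi j)) (Lr (lsubmx zh) (rsubmx zh)).
  move=> zh psi hzh Hc e e0.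
  have e40 : 0 < e / 4 by rewrite divr_gt0.
  have [d1 d10 H1] := grad_cont_l zh Hf e40.
  have [d2 d20 H2] := grad_cont_r zh Hg e40.
  have Qzh : (uncurryv Q zh < +oo)%E by rewrite /uncurryv Qdom // ltry.
  have [d3 d30 H3] := Hqcont zh Qzh _ e40.
  have [d4 d40 H4] := Hhcont (lsubmx zh) hzh _ e40.
  have [d5 [d50 d51 d52]] := posmin d10 d20.
  have [d6 [d60 d61 d62]] := posmin d30 d40.
  have [del [del0 dl1 dl2]] := posmin d50 d60.
  have [N HN] := Hc del del0.
  exists N => k Hk; have Hk' := HN k Hk.
  have A1 := H1 _ (lt_le_trans Hk' (le_trans dl1 d51)).
  have A2 := H2 _ (lt_le_trans Hk' (le_trans dl1 d52)).
  have A3 := H3 _ (domz _) (lt_le_trans Hk' (le_trans dl2 d61)).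
  have A4 := H4 (lsubmx (z (psi k).+1)) ltac:(by rewrite zE row_mxKl domx)
     (le_lt_trans (normv_lsubB _ _) (lt_le_trans Hk' (le_trans dl2 d62))).
  move: A1 A2 A3 A4; rewrite /uncurryv zE !row_mxKl !row_mxKr /ell /Lr /H.
  rewrite !ltr_norml => /andP[a1 b1] /andP[a2 b2] /andP[a3 b3] /andP[a4 b4].
  apply/andP; split; lra.
have value : forall zh, C zh -> Lz zh = ls%:E.
  move=> zh Czh; have [psi [Hpsi Hc]] := psiP zh Czh.
  have hzh := domzh zh Czh.
  have H1 := Lcont zh psi hzh Hc; have H2 := cvgr_sub Hpsi ellcv.
  by rewrite /Lz /uncurryv Ldom // (cvgr_unique H1 H2).
have Pk_gen : forall (x1 xa : 'rV[R]_n) (y1 ya : 'rV[R]_m), (h x1 < +oo)%E ->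
  (forall x' : 'rV[R]_n, (Q x1 ya + (dotv (gradf xa) x1 + bregman phi1 dphi1 x1 xa)%:E
      <= Q x' ya + (dotv (gradf xa) x' + bregman phi1 dphi1 x' xa)%:E)%E) ->
  (forall y' : 'rV[R]_m, (Q x1 y1 + (dotv (gradg ya) y1 + bregman phi2 dphi2 y1 ya)%:E
      <= Q x1 y' + (dotv (gradg ya) y' + bregman phi2 dphi2 y' ya)%:E)%E) ->
  lim_sub Lz (row_mx x1 y1)
    (row_mx (gradf x1 - gradf xa - dphi1 x1 + dphi1 xa + gradxq x1 y1 - gradxq x1 ya)
            (gradg y1 - gradg ya - dphi2 y1 + dphi2 ya)).
  move=> x1 xa y1 ya hx1 HX HY.
  pose v := - (gradf xa + dphi1 x1 - dphi1 xa) - gradxq x1 ya + gradxq x1 y1.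
  pose w := - (gradg ya + dphi2 y1 - dphi2 ya).
  have Hv : frechet_sub (fun x' => Q x' y1) x1 v.
    split; first by rewrite Qdom.
    move=> e e0; have e30 : 0 < e / 3 by rewrite divr_gt0.
    have [d1 d10 H1] := Hphi1 x1 _ e30.
    have [d2 d20 H2] := Hq1 ya x1 _ e30.
    have [d3 d30 H3] := Hq1 y1 x1 _ e30.
    have [d4 [d40 d41 d42]] := posmin d10 d20.
    have [del [del0 dl1 dl2]] := posmin d40 d30.
    exists del => // x' Hx'.
    have [hx'|hx'] := boolP (h x' < +oo)%E; last first.
      have -> : Q x' y1 = +oo%E.
        move: hx' (hnoo x'); rewrite HQdec; case: (h x') => [r'|_ _|//].
          by rewrite ltry.
        by rewrite addey.
      exact: leey.
    have HXx := HX x'.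
    rewrite !Qdom // -!EFinD lee_fin in HXx *.
    have hd1 : normv (x' - x1) < d1 by lra.
    have hd2 : normv (x' - x1) < d2 by lra.
    have hd3 : normv (x' - x1) < d3 by lra.
    have A1 := H1 x' hd1; have A2 := H2 x' hd2; have A3 := H3 x' hd3.
    cbv beta in A2; cbv beta in A3.
    rewrite lee_fin.
    move: A1 A2 A3 HXx; rewrite /bregman /v !(dotvDl, dotvNl, dotvDr, dotvNr).
    rewrite !ler_norml => /andP[a1 b1] /andP[a2 b2] /andP[a3 b3] hX.
    lra.
  have Hw : frechet_sub (fun y' => Q x1 y') y1 w.
    split; first by rewrite Qdom.
    move=> e e0.
    have [del del0 H1] := Hphi2 y1 _ e0.
    exists del => // y' Hy'.
    have HYy := HY y'.
    rewrite !Qdom // -!EFinD lee_fin in HYy *.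
    have A1 := H1 y' Hy'.
    rewrite lee_fin.
    move: A1 HYy; rewrite /bregman /w !(dotvDl, dotvNl, dotvDr, dotvNr).
    rewrite !ler_norml => /andP[a1 b1] hY.
    lra.
  have Hl := Hsub x1 y1 ltac:(by rewrite Qdom // ltry) v w (frechet_lim Hv) (frechet_lim Hw).
  have := lim_sub_sum Hf Hfc Hg Hgc Hl.
  rewrite row_mxKl row_mxKr add_row_mx.
  have -> : v + gradf x1 = gradf x1 - gradf xa - dphi1 x1 + dphi1 xa + gradxq x1 y1 - gradxq x1 ya.
    by apply/rowP => i; rewrite /v !mxE; ring.
  have -> : w + gradg y1 = gradg y1 - gradg ya - dphi2 y1 + dphi2 ya.
    by apply/rowP => i; rewrite /w !mxE; ring.
  by [].
pose P k := row_mx (gradf (x k.+1) - gradf (xh k) - dphi1 (x k.+1) + dphi1 (xh k)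
     + gradxq (x k.+1) (y k.+1) - gradxq (x k.+1) (yh k))
   (gradg (y k.+1) - gradg (yh k) - dphi2 (y k.+1) + dphi2 (yh k)).
have Pk : forall k, lim_sub Lz (z k.+1) (P k).
  by move=> k; apply: Pk_gen; [exact: domx | exact: (Hxstep k).2 | exact: (Hystep k).2].
have [xi xi0 Hxi] : exists2 xi : R, 0 < xi & forall (xb : 'rV[R]_n) (y0 yb : 'rV[R]_m),
    range (fun k => x k.+1) xb -> (range y `|` range yh) y0 -> (range y `|` range yh) yb ->
    normv (gradxq xb y0 - gradxq xb yb) <= xi * normv (y0 - yb).
  apply: Hqlip.
    exists (B + B) => _ [a [k _ <-] [b Hb <-]].
    apply: le_trans (normv_row_le _ _) _; apply: lerD; first exact: bxk.
    by case: Hb => -[j _ <-]; [exact: byk | exact: byh].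
  by move=> a b [k _ <-] _; rewrite Qdom ?domx // ltry.
have Pb : forall k, normv (P k - 0) <= (Lf + eta1) * normv (x k.+1 - xh k)
    + (xi + Lg + eta2) * normv (y k.+1 - yh k).
  move=> k; rewrite subr0 /P.
  apply: le_trans (normv_row_le _ _) _.
  have -> : gradf (x k.+1) - gradf (xh k) - dphi1 (x k.+1) + dphi1 (xh k)
     + gradxq (x k.+1) (y k.+1) - gradxq (x k.+1) (yh k) =
     (gradf (x k.+1) - gradf (xh k)) + (dphi1 (xh k) - dphi1 (x k.+1))
     + (gradxq (x k.+1) (y k.+1) - gradxq (x k.+1) (yh k)).
    by apply/rowP => i; rewrite !mxE; ring.
  have -> : gradg (y k.+1) - gradg (yh k) - dphi2 (y k.+1) + dphi2 (yh k) =
     (gradg (y k.+1) - gradg (yh k)) + (dphi2 (yh k) - dphi2 (y k.+1)).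
    by apply/rowP => i; rewrite !mxE; ring.
  have a1 := normvD (gradf (x k.+1) - gradf (xh k) + (dphi1 (xh k) - dphi1 (x k.+1)))
     (gradxq (x k.+1) (y k.+1) - gradxq (x k.+1) (yh k)).
  have a2 := normvD (gradf (x k.+1) - gradf (xh k)) (dphi1 (xh k) - dphi1 (x k.+1)).
  have a3 := normvD (gradg (y k.+1) - gradg (yh k)) (dphi2 (yh k) - dphi2 (y k.+1)).
  have b1 := Hflip (x k.+1) (xh k).
  have b2 := Hdphi1 (xh k) (x k.+1); rewrite [normv (xh k - _)]normvB in b2.
  have b3 := Hglip (y k.+1) (yh k).
  have b4 := Hdphi2 (yh k) (y k.+1); rewrite [normv (yh k - _)]normvB in b4.
  have b5 := Hxi (x k.+1) (y k.+1) (yh k) (ex_intro2 _ _ k I erefl)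
    (or_introl (ex_intro2 _ _ k.+1 I erefl)) (or_intror (ex_intro2 _ _ k I erefl)).
  lra.
have Pcv : cvgv P 0.
  have := cvgrD (cvgrZ _ (Lf + eta1) stepx) (cvgrZ _ (xi + Lg + eta2) stepy).
  rewrite addr0 => Hc.
  exact: (@squeeze _ _ P 0 _ Pb Hc).
split.
- split.
  + exact: BW bzall.
  + exact: cluster_compact bzall.
  + by exists ls.
- move=> zh Czh.
  have [psi [Hpsi Hc]] := psiP zh Czh.
  have hzh := domzh zh Czh.
  apply: (lim_sub_closed (a := fun j => z (psi j).+1) (b := fun j => P (psi j))).
  + by rewrite /Lz /uncurryv Ldom.
  + by move=> j; exact: Pk.
  + exact: Hc.
  + have E : (fun j => fine (Lz (z (psi j).+1))) = (fun j => ell (psi j)).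
      by apply: funext => j; rewrite zE Lzrow Ldom ?domx.
    rewrite E /Lz /uncurryv Ldom //=; exact: Lcont.
  + move=> e e0; have [N HN] := Pcv e e0; exists N => k Hk; apply: HN.
    exact: leq_trans Hk (Hpsi k).
- exact: dist_cvg bzall.
Qed.
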